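(* Let $(G_n)$ be a sequence of graphs with $\min_{v\in V}\delta_v=\omega(\log n)$, let $k\ge3$ be odd and $p_k^\star<p\le1$, and run the $(k,p,\mathcal B)$-Edge-Majority dynamics from the configuration in which every node is $\mathcal R$. Then for every $\gamma>0$ there exists a constant $T=T(p,k,\gamma)$ such that $$\Pr\big(\exists t\le T:\ \phi^{(t)}_{\max}\le\gamma\big)=1-o(1).$$
   Context: $G_n=(V,E)$, $V=\{1,\dots,n\}$, $N(u)$ neighbourhood, $\delta_u=|N(u)|$; asymptotics as $n\to\infty$. States in $\{\mathcal R,\mathcal B\}$; $R^{(t)}$ the $\mathcal R$ nodes at round $t$; $\phi_u^{(t)}=|N(u)\cap R^{(t)}|/\delta_u$, $\phi^{(t)}_{\max}=\max_u\phi_u^{(t)}$. $(k,p,\mathcal B)$-Edge-Majority: in each round $t\ge1$ every node $u$ independently samples $k$ neighbours uniformly with replacement; for each sampled $v$, independently, $u$ sees $v$ as $\mathcal B$ with probability $p$ and otherwise sees $v$'s true state at round $t-1$; $u$ adopts the state seen more often. $F_{p,k}(x)=\Pr[\mathrm{Bin}(k,(1-p)x)\ge(k+1)/2]$. $p_k^\star\in[1/9,1/2)$ is the (unique) value such that for $0\le p<p_k^\star$, $F_{p,k}(x)=x$ on $[0,1]$ has exactly three solutions, for $p=p_k^\star$ exactly two, and for $p>p_k^\star$ only $0$. *)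

(* Defs.v *)
From HB Require Import structures.
From mathcomp Require Import all_boot all_order all_algebra.
From mathcomp Require Import all_classical all_reals.
From mathcomp Require Import exp.
Set Implicit Arguments. Unset Strict Implicit. Unset Printing Implicit Defensive.
Import Order.TTheory GRing.Theory Num.Theory.
Local Open Scope ring_scope.
Local Open Scope classical_set_scope.

Section EdgeMajority.
Variable R : realType.

(* A graph on V = {0,...,n-1} is given by an adjacency relation G : rel 'I_n
   (assumed symmetric and irreflexive in the theorem).  Configurations:
   true = state R, false = state B. *)
Definition config (n : nat) := {ffun 'I_n -> bool}.

Definition allR (n : nat) : config n := [ffun=> true].

Definition deg n (G : rel 'I_n) (u : 'I_n) : nat := #|[set v | G u v]|.

Definition phi n (G : rel 'I_n) (x : config n) (u : 'I_n) : R :=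
  (#|[set v | G u v && x v]|)%:R / (deg G u)%:R.

Definition phimax n (G : rel 'I_n) (x : config n) : R :=
  \big[Num.max/0]_(u < n) phi G x u.

(* F_{p,k}(x) = Pr[Bin(k,(1-p)x) >= (k+1)/2] *)
Definition Fpk (p : R) (k : nat) (x : R) : R :=
  let q := (1 - p) * x in
  \sum_(i < k.+1 | (((k.+1) %/ 2)%N <= i)%N) 'C(k, i)%:R * q ^+ i * (1 - q) ^+ (k - i).

(* p_k^star: the threshold above which F_{p,k}(x) = x has only the solution 0
   on [0,1]; below it there are nonzero solutions. *)
Definition pstar (k : nat) : R :=
  sup [set p : R | 0 <= p <= 1 /\ exists x : R, 0 < x <= 1 /\ Fpk p k x = x].

(* One sample of node u: a neighbour v drawn uniformly from N(u) (with
   replacement), together with a noise bit b (b = true with probability p,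
   in which case v is seen as B). *)
Definition sample_weight n (G : rel 'I_n) (p : R) (u : 'I_n)
    (s : 'I_n * bool) : R :=
  (if G u s.1 then (deg G u)%:R^-1 else 0) * (if s.2 then p else 1 - p).

Definition seen_R n (x : config n) (s : 'I_n * bool) : bool := ~~ s.2 && x s.1.

(* Probability that node u is in state R at the next round, given the current
   configuration x: sum over all k independent samples; u adopts the state
   seen more often (k odd, so no ties): R iff 2 * #(R seen) > k. *)
Definition probR n (G : rel 'I_n) (p : R) (k : nat) (x : config n)
    (u : 'I_n) : R :=
  \sum_(s : {ffun 'I_k -> 'I_n * bool})
     (\prod_(i < k) sample_weight G p u (s i)) *
     (if (k < 2 * #|[set i | seen_R x (s i)]|)%N then 1 else 0).

Definition trans n (G : rel 'I_n) (p : R) (k : nat) (x y : config n) : R :=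
  \prod_(u < n) (if y u then probR G p k x u else 1 - probR G p k x u).

(* Pr( exists t <= T : phi_max^(t) <= gamma ), the dynamics started at
   round 0 from the all-R configuration: sum of the probabilities of all
   trajectories (x^(0), ..., x^(T)) with x^(0) = all R hitting the event. *)
Definition prob_hit n (G : rel 'I_n) (p : R) (k : nat) (gamma : R)
    (T : nat) : R :=
  \sum_(w : {ffun 'I_T.+1 -> config n} |
          (w ord0 == allR n) && [exists t, phimax G (w t) <= gamma])
     \prod_(t < T) trans G p k (w (inord t)) (w (inord t.+1)).

End EdgeMajority.

(* Main.v *)
Require Import Defs.
From HB Require Import structures.
From mathcomp Require Import all_boot all_order all_algebra.
From mathcomp Require Import all_classical all_reals.
From mathcomp Require Import exp.
From mathcomp Require Import boolp classical_sets topology normedtype sequences derive realfun.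
From mathcomp Require Import lra zify ring.
Set Implicit Arguments. Unset Strict Implicit. Unset Printing Implicit Defensive.
Import Order.TTheory GRing.Theory Num.Theory.
Import numFieldNormedType.Exports.
Local Open Scope ring_scope.
Section Chain.
Variable R : realType.
Variable C : finType.

Definition ext T (w : {ffun 'I_T.+1 -> C}) (y : C) : {ffun 'I_T.+2 -> C} :=
  [ffun i : 'I_T.+2 => if (i < T.+1)%N then w (inord i) else y].

Definition restr T (w : {ffun 'I_T.+2 -> C}) : {ffun 'I_T.+1 -> C} * C :=
  ([ffun i : 'I_T.+1 => w (widen_ord (leqnSn _) i)], w ord_max).

Lemma sum_ffunS T (F : {ffun 'I_T.+2 -> C} -> R) :
  \sum_w F w = \sum_(w : {ffun 'I_T.+1 -> C}) \sum_(y : C) F (ext w y).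
Proof.
rewrite pair_big /=.
rewrite (reindex (fun pr : {ffun 'I_T.+1 -> C} * C => ext pr.1 pr.2)) //=.
exists (@restr T) => [[w y] _|w _].
  rewrite /restr /ext; congr pair.
    apply/ffunP => i; rewrite !ffunE /= ltn_ord; congr (w _).
    by apply/val_inj; rewrite /= inordK // ltnS ltnW.
  by rewrite ffunE /= ltnn.
apply/ffunP => i; rewrite /restr /ext !ffunE /=.
case: ifP => hi; rewrite ?ffunE.
  by congr (w _); apply/val_inj; rewrite /= inordK.
congr (w _); apply/val_inj => /=.
have h1 : (T.+1 <= i)%N by rewrite leqNgt hi.
have h2 := ltn_ord i.
by apply/eqP; rewrite eqn_leq h1 -ltnS h2.
Qed.

Lemma ext_inord T w y (j : nat) : (j < T.+1)%N -> @ext T w y (inord j) = w (inord j).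
Proof.
move=> hj; rewrite /ext ffunE inordK ?hj; last exact: ltnW.
by congr (w _); apply/val_inj; rewrite /= !inordK.
Qed.

Lemma ext_last T w y : @ext T w y (inord T.+1) = y.
Proof. by rewrite /ext ffunE inordK // ltnn. Qed.

Lemma chain (K : C -> C -> R) (delta : R) (x0 : C) :
  (forall x y, 0 <= K x y) -> 0 <= delta ->
  (forall x, 1 - delta <= \sum_y K x y /\ \sum_y K x y <= 1) ->
  forall T,
  1 - T%:R * delta <= \sum_(w : {ffun 'I_T.+1 -> C} | w ord0 == x0)
     \prod_(t < T) K (w (inord t)) (w (inord t.+1)) /\
  \sum_(w : {ffun 'I_T.+1 -> C} | w ord0 == x0)
     \prod_(t < T) K (w (inord t)) (w (inord t.+1)) <= 1.
Proof.
move=> K0 d0 Ks; elim=> [|T [IH1 IH2]].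
  rewrite (big_pred1 [ffun=> x0]).
    by rewrite big_ord0 mul0r subr0; lra.
  move=> w /=; apply/eqP/eqP => [h|->]; last by rewrite ffunE.
  by apply/ffunP => i; rewrite ffunE (ord1 i).
set S := \sum_(w : {ffun 'I_T.+1 -> C} | w ord0 == x0) _ in IH1 IH2.
have -> : \sum_(w : {ffun 'I_T.+2 -> C} | w ord0 == x0)
     \prod_(t < T.+1) K (w (inord t)) (w (inord t.+1)) =
  \sum_(w : {ffun 'I_T.+1 -> C} | w ord0 == x0)
     (\prod_(t < T) K (w (inord t)) (w (inord t.+1))) * \sum_y K (w (inord T)) y.
  rewrite big_mkcond sum_ffunS [RHS]big_mkcond; apply: eq_bigr => w _.
  have e0 y : ext w y ord0 = w ord0 by rewrite /ext ffunE /=; congr (w _); apply/val_inj; rewrite /= inordK.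
  rewrite mulr_sumr; under eq_bigr => y _ do rewrite e0.
  case: ifP => _; last by rewrite big1.
  apply: eq_bigr => y _; rewrite big_ord_recr /=; congr (_ * _).
    apply: eq_bigr => t _; have ht := ltn_ord t.
    rewrite !ext_inord //; lia.
  by rewrite ext_inord // ext_last.
split.
- apply: (@le_trans _ _ (\sum_(w : {ffun 'I_T.+1 -> C} | w ord0 == x0)
     (\prod_(t < T) K (w (inord t)) (w (inord t.+1))) * (1 - delta))).
    rewrite -mulr_suml -/S; rewrite -natr1; nra.
  apply: ler_sum => w _; apply: ler_wpM2l; first by apply: prodr_ge0 => t _.
  by case: (Ks (w (inord T))).
- apply: (@le_trans _ _ S) => //; rewrite /S; apply: ler_sum => w _.
  rewrite -[X in _ <= X]mulr1; apply: ler_wpM2l; first by apply: prodr_ge0 => t _.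
  by case: (Ks (w (inord T))).
Qed.
End Chain.
Section Binom.
Variable R : realType.

Lemma ccard (T : finType) (P : pred T) : #|[set v | P v]%classic| = #|P|.
Proof.
apply: eq_card => v; apply/idP/idP => [/set_mem //|h].
exact: mem_set.
Qed.

Definition Lf (k : nat) (f : nat -> R) (P : {poly R}) : R :=
  \sum_(j < k.+1) P`_j * f j.

Lemma Lf_sum k f (I : finType) (F : I -> {poly R}) :
  Lf k f (\sum_i F i) = \sum_i Lf k f (F i).
Proof.
apply: (big_morph (Lf k f)) => [P Q|]; rewrite /Lf.
  by rewrite -big_split /=; apply: eq_bigr => j _; rewrite coefD mulrDl.
by rewrite big1 // => j _; rewrite coef0 mul0r.
Qed.

Lemma Lf_mon k f c m : (m <= k)%N -> Lf k f (c%:P * 'X^m) = c * f m.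
Proof.
move=> hm; rewrite /Lf (bigD1 (Ordinal (n:=k.+1) (m:=m) hm)) //= big1.
  by rewrite coefCM coefXn eqxx mulr1 addr0.
move=> j hj; rewrite coefCM coefXn.
suff -> : (j == m :> nat) = false by rewrite mulr0 mul0r.
by apply/negbTE; apply: contra hj => /eqP h; apply/eqP/val_inj.
Qed.

Lemma binom_sum (S : finType) (w : S -> R) (A : pred S) k (f : nat -> R) :
 \sum_(s : {ffun 'I_k -> S}) (\prod_(i < k) w (s i)) * f #|[set i | A (s i)]%classic|
 = \sum_(j < k.+1) 'C(k, j)%:R * (\sum_(t | A t) w t) ^+ j
      * (\sum_(t | ~~ A t) w t) ^+ (k - j) * f j.
Proof.
set a := \sum_(t | A t) w t; set b := \sum_(t | ~~ A t) w t.
have E : \sum_(s : {ffun 'I_k -> S}) (\prod_(i < k) w (s i))%:P * 'X^#|[set i | A (s i)]%classic|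
   = (b%:P + a%:P * 'X) ^+ k.
  have -> : (b%:P + a%:P * 'X) ^+ k = \prod_(i < k) (b%:P + a%:P * 'X)
    by rewrite prodr_const card_ord.
  have -> : b%:P + a%:P * 'X = \sum_t (w t)%:P * (if A t then 'X else 1).
    rewrite (bigID A) /= addrC; congr (_ + _).
      by rewrite /b rmorph_sum /=; apply: eq_bigr => t /negbTE ->; rewrite mulr1.
    by rewrite /a rmorph_sum /= mulr_suml; apply: eq_bigr => t ->.
  rewrite bigA_distr_bigA /=; apply: eq_bigr => s _.
  rewrite big_split /= rmorph_prod /=; congr (_ * _).
  rewrite -big_mkcond /= prodr_const; congr (_ ^+ _).
  by rewrite ccard.
have := congr1 (Lf k f) E.
rewrite Lf_sum (eq_bigr (fun s : {ffun 'I_k -> S} => (\prod_(i < k) w (s i)) * f #|[set i | A (s i)]%classic|)); last first.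
  move=> s _; rewrite Lf_mon //.
  by apply: leq_trans (max_card _) _; rewrite card_ord.
move=> ->; rewrite exprDn Lf_sum; apply: eq_bigr => j _.
rewrite -mulrnAl -!rmorphXn /= exprMn_comm; last exact: mulrC.
have -> : (b ^+ (k - j))%:P *+ 'C(k, j) * (a%:P ^+ j * 'X^j) =
   ('C(k, j)%:R * a ^+ j * b ^+ (k - j))%:P * 'X^j.
  rewrite !rmorphM !rmorphXn /= rmorph_nat -mulr_natl; ring.
by rewrite Lf_mon // -ltnS.
Qed.
End Binom.
Section Model.
Variable R : realType.

Lemma sum_if_card (I : finType) (P : pred I) (c : R) :
  \sum_(v : I) (if P v then c else 0) = #|[set v | P v]%classic|%:R * c.
Proof. by rewrite -big_mkcond /= sumr_const ccard mulr_natl. Qed.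

Lemma le_bigmax0 (I : finType) (F : I -> R) i : F i <= \big[Num.max/0]_(j : I) F j.
Proof.
have := mem_index_enum i; elim: (index_enum I) => // a r IH.
rewrite in_cons big_cons => /orP[/eqP->|h]; rewrite le_max ?lexx //.
by rewrite IH // orbT.
Qed.

Lemma bigmax0_le (I : finType) (F : I -> R) B : 0 <= B -> (forall i, F i <= B) ->
  \big[Num.max/0]_(j : I) F j <= B.
Proof.
move=> B0 hF; apply: (big_ind (fun v => v <= B)) => // a b ha hb.
by rewrite ge_max ha hb.
Qed.

Lemma sum_pair (I J : finType) (F : I * J -> R) :
  \sum_s F s = \sum_i \sum_j F (i, j).
Proof. by rewrite pair_bigA; apply: eq_bigr => -[]. Qed.

Variables (n : nat) (G : rel 'I_n) (p : R) (k : nat).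
Hypothesis hp0 : 0 <= p.
Hypothesis hp1 : p <= 1.
Hypothesis hkodd : odd k.

Lemma phi_ge0 x u : 0 <= phi R G x u.
Proof. by rewrite /phi divr_ge0. Qed.

Lemma phi_le1 x u : phi R G x u <= 1.
Proof.
rewrite /phi.
have hc : (#|[set v | G u v && x v]%classic| <= deg G u)%N.
  rewrite /deg !ccard; apply: subset_leq_card; apply/fintype.subsetP => v.
  by rewrite /in_mem /=; case/andP.
case: (posnP (deg G u)) => [->|dp]; first by rewrite invr0 mulr0.
by rewrite ler_pdivrMr ?ltr0n // mul1r ler_nat.
Qed.

Lemma phimax_le1 x : phimax R G x <= 1.
Proof. by apply: bigmax0_le => // u; apply: phi_le1. Qed.

Lemma sw_ge0 u s : 0 <= sample_weight G p u s.
Proof.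
rewrite /sample_weight; apply: mulr_ge0; first by case: ifP => // _; rewrite invr_ge0 ler0n.
by case: ifP => _; rewrite ?subr_ge0.
Qed.

Lemma sw_sum u : \sum_s sample_weight G p u s = if deg G u == 0%N then 0 else 1.
Proof.
rewrite sum_pair /=.
under eq_bigr => v _ do rewrite big_bool /= -mulrDr addrC subrK mulr1.
rewrite sum_if_card -/(deg G u); case: eqP => [->|/eqP d0]; first by rewrite mul0r.
by rewrite mulfV // pnatr_eq0.
Qed.

Lemma sw_seen x u :
  \sum_(s | seen_R x s) sample_weight G p u s = (1 - p) * phi R G x u.
Proof.
rewrite big_mkcond sum_pair /=.
under eq_bigr => v _ do rewrite big_bool /seen_R /= add0r /sample_weight /=.
rewrite /phi.
have -> : \sum_(v < n) (if x v then (if G u v then (deg G u)%:R^-1 else 0) * (1 - p) else 0)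
   = \sum_(v < n) (if G u v && x v then (deg G u)%:R^-1 * (1 - p) else 0).
  by apply: eq_bigr => v _; case: (x v); case: (G u v); rewrite ?andbF ?mul0r.
rewrite sum_if_card; ring.
Qed.

Lemma probR_ge0 x u : 0 <= probR G p k x u.
Proof.
apply: sumr_ge0 => s _; apply: mulr_ge0; last by case: ifP.
by apply: prodr_ge0 => i _; apply: sw_ge0.
Qed.

Lemma probR_le1 x u : probR G p k x u <= 1.
Proof.
apply: (@le_trans _ _ (\sum_(s : {ffun 'I_k -> 'I_n * bool}) \prod_(i < k) sample_weight G p u (s i))).
  apply: ler_sum => s _; have h0 : 0 <= \prod_(i < k) sample_weight G p u (s i).
    by apply: prodr_ge0 => i _; apply: sw_ge0.
  by case: ifP; rewrite ?mulr1 ?mulr0.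
rewrite -(bigA_distr_bigA (fun (i : 'I_k) t => sample_weight G p u t)) /= prodr_const card_ord sw_sum.
case: eqP => _; last by rewrite expr1n.
case: k hkodd => // k' _; by rewrite expr0n.
Qed.
End Model.
Section Model2.
Variable R : realType.
Variables (n : nat) (G : rel 'I_n) (p : R) (k : nat).
Hypothesis hp0 : 0 <= p.
Hypothesis hp1 : p <= 1.
Hypothesis hkodd : odd k.

Lemma half_odd (j : nat) : ((k.+1)%/2 <= j)%N = (k < 2*j)%N.
Proof.
have := odd_double_half k; rewrite hkodd => h; rewrite -h.
apply/idP/idP; lia.
Qed.

Lemma probR_F x u : probR G p k x u = Fpk p k (phi R G x u).
Proof.
case: (posnP (deg G u)) => [d0|dp].
  have hG v : G u v = false.
    by move: d0; rewrite /deg ccard => /card0_eq /(_ v).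
  rewrite /phi d0 invr0 mulr0 /probR /Fpk /= mulr0.
  rewrite big1; last first.
    have k0 : (0 < k)%N by move: hkodd; case: (k).
    move=> s _; rewrite (bigD1 (Ordinal k0)) //=.
    by rewrite {1}/sample_weight hG !mul0r.
  rewrite big1 // => j hj; rewrite expr0n.
  suff -> : (nat_of_ord j == 0%N) = false by rewrite mulr0 mul0r.
  by apply/negbTE; move: hj; rewrite half_odd; case: (nat_of_ord j).
have E := binom_sum (sample_weight G p u) (seen_R x) k
   (fun j => if (k < 2 * j)%N then 1 else 0).
simpl in E.
rewrite /probR E sw_seen.
have hb : \sum_(t | ~~ seen_R x t) sample_weight G p u t = 1 - (1 - p) * phi R G x u.
  move: (sw_sum G p u); rewrite (bigID (seen_R x)) /= sw_seen.
  have -> : (deg G u == 0%N) = false by rewrite eqn0Ngt dp.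
  move=> h; lra.
rewrite hb /Fpk /= [RHS]big_mkcond; apply: eq_bigr => j _ /=.
by rewrite half_odd; case: ifP; rewrite ?mulr1 ?mulr0.
Qed.

Lemma probR_01 x u : 0 <= probR G p k x u <= 1.
Proof. by rewrite probR_ge0 // probR_le1. Qed.

Lemma trans_ge0 x y : 0 <= trans G p k x y.
Proof.
apply: prodr_ge0 => u _; have := probR_01 x u.
by case: (y u) => /andP[h0 h1]; rewrite ?subr_ge0.
Qed.

Lemma trans_sum1 x : \sum_y trans G p k x y = 1.
Proof.
rewrite /trans -(bigA_distr_bigA (fun u (b : bool) => if b then probR G p k x u else 1 - probR G p k x u)).
by rewrite big1 // => u _; rewrite big_bool /= addrC subrK.
Qed.

Definition Scount (u : 'I_n) (y : config n) : nat := #|[set v | G u v && y v]%classic|.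

Lemma mgf x u lam :
  \sum_y trans G p k x y * expR (lam * (Scount u y)%:R) =
  \prod_v (if G u v then 1 + probR G p k x v * (expR lam - 1) else 1).
Proof.
have e1 y : expR (lam * (Scount u y)%:R) = \prod_v (if G u v && y v then expR lam else 1).
  by rewrite mulrC expRM_natl -big_mkcond /= prodr_const /Scount ccard.
transitivity (\sum_(y : config n) \prod_v ((if y v then probR G p k x v else 1 - probR G p k x v) *
   (if G u v && y v then expR lam else 1))).
  by apply: eq_bigr => y _; rewrite e1 /trans -big_split.
rewrite -(bigA_distr_bigA (fun v (b : bool) => (if b then probR G p k x v else 1 - probR G p k x v) *
   (if G u v && b then expR lam else 1))).
apply: eq_bigr => v _; rewrite big_bool /= andbT andbF.
by case: (G u v); ring.
Qed.

End Model2.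
Section Chernoff.
Variable R : realType.

Lemma exp_bound (lam : R) : 0 <= lam -> lam <= 1/2 -> expR lam - 1 <= lam + 2 * lam^+2.
Proof.
move=> l0 l1; have h := expR_ge1Dx (- lam).
have e : expR lam * expR (- lam) = 1 by rewrite -expRD subrr expR0.
have hp := expR_gt0 lam; have hq := expR_gt0 (- lam).
nra.
Qed.

Variables (n : nat) (G : rel 'I_n) (p : R) (k : nat).
Hypothesis hp0 : 0 <= p.
Hypothesis hp1 : p <= 1.
Hypothesis hkodd : odd k.

Lemma chern_u x u (M eps : R) : 0 < eps -> eps <= 1 -> 0 <= M -> M <= 1 ->
  (forall v, G u v -> probR G p k x v <= M) ->
  \sum_y trans G p k x y * (if M + eps < phi R G y u then 1 else 0)
    <= expR (- ((deg G u)%:R * eps ^+ 2 / 8)).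
Proof.
move=> e0 e1 M0 M1 hM.
case: (posnP (deg G u)) => [d0|dp].
  rewrite big1 ?expR_ge0 // => y _.
  rewrite /phi d0 invr0 mulr0.
  have -> : (M + eps < 0) = false by apply/negbTE; rewrite -leNgt; lra.
  by rewrite mulr0.
set d := (deg G u)%:R.
have d0 : 0 < d by rewrite /d ltr0n.
set lam := eps / 4.
have l0 : 0 <= lam by rewrite /lam; lra.
set t := d * (M + eps).
have step1 : \sum_y trans G p k x y * (if M + eps < phi R G y u then 1 else 0) <=
   \sum_y trans G p k x y * expR (lam * (Scount G u y)%:R - lam * t).
  apply: ler_sum => y _; apply: ler_wpM2l; first exact: trans_ge0.
  case: ifP => h; last exact: expR_ge0.
  have ht : t <= (Scount G u y)%:R.
    move: h; rewrite /phi -/(Scount G u y) -/d ltr_pdivlMr // /t => h.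
    rewrite mulrC; exact: ltW.
  apply: le_trans (expR_ge1Dx _); rewrite lerDl -mulrBr mulr_ge0 //; lra.
have step2 : \sum_y trans G p k x y * expR (lam * (Scount G u y)%:R - lam * t) =
   expR (- (lam * t)) * \prod_v (if G u v then 1 + probR G p k x v * (expR lam - 1) else 1).
  rewrite -mgf // mulr_sumr; apply: eq_bigr => y _.
  by rewrite addrC expRD mulrCA.
have el : 1 <= expR lam by have := expR_ge1Dx lam; lra.
have step3 : \prod_v (if G u v then 1 + probR G p k x v * (expR lam - 1) else 1) <=
   expR (d * M * (expR lam - 1)).
  apply: (@le_trans _ _ (expR (\sum_v (if G u v then probR G p k x v * (expR lam - 1) else 0)))).
    rewrite expR_sum; apply: ler_prod => v _; case: (G u v).
      have /andP[h0 h1] : 0 <= probR G p k x v <= 1 by apply: probR_01.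
      apply/andP; split; last exact: expR_ge1Dx.
      have : 0 <= probR G p k x v * (expR lam - 1) by apply: mulr_ge0; lra.
      lra.
    by rewrite expR0 lexx ler01.
  rewrite ler_expR.
  apply: (@le_trans _ _ (\sum_v (if G u v then M * (expR lam - 1) else 0))).
    apply: ler_sum => v _; case: ifP => // hv; apply: ler_wpM2r; first lra.
    exact: hM.
  by rewrite sum_if_card -/(deg G u) -/d mulrA.
apply: (le_trans step1); rewrite step2.
apply: (@le_trans _ _ (expR (- (lam * t)) * expR (d * M * (expR lam - 1)))).
  by apply: ler_wpM2l; first exact: expR_ge0.
rewrite -expRD ler_expR.
have l1 : lam <= 1/2 by rewrite /lam; lra.
have hb := exp_bound l0 l1.
have hdm : 0 <= d * M by apply: mulr_ge0 => //; lra.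
have : d * M * (expR lam - 1) <= d * M * (lam + 2 * lam ^+ 2) by apply: ler_wpM2l.
rewrite /t /lam => h; rewrite /lam in h.
have h2 : d * M * (2 * (eps / 4) ^+ 2) <= d * (2 * (eps / 4) ^+ 2).
  have q : 0 <= 2 * (eps / 4) ^+ 2 by rewrite mulr_ge0 // sqr_ge0.
  rewrite -mulrA ler_wpM2l ?(ltW d0) //.
  by rewrite -[X in _ <= X]mul1r ler_wpM2r.
nra.
Qed.

Lemma step_bound x (c g' eps D : R) : 0 < eps -> eps <= 1 -> 0 <= c -> 0 <= g' -> g' <= 1 ->
  (forall z, 0 <= z -> z <= 1 -> Fpk p k z <= Num.max (z - c) g') ->
  (forall u, D <= (deg G u)%:R) ->
  \sum_y trans G p k x y * (if phimax R G y <= Num.max (phimax R G x - c) g' + eps then 0 else 1)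
    <= n%:R * expR (- (D * eps ^+ 2 / 8)).
Proof.
move=> e0 e1 c0 g0 g1 hF hD.
set M := Num.max (phimax R G x - c) g'.
have M0 : 0 <= M by rewrite le_max g0 orbT.
have M1 : M <= 1 by rewrite ge_max g1 andbT; have := phimax_le1 R G x; lra.
have hM u v : G u v -> probR G p k x v <= M.
  move=> _; rewrite probR_F // (le_trans (hF _ (phi_ge0 R G _ _) (phi_le1 R G _ _))) //.
  rewrite ge_max /M !le_max lexx !orbT andbT.
  by have := le_bigmax0 (phi R G x) v; rewrite -/(phimax R G x) => h; rewrite lerB // orTb.
apply: (@le_trans _ _ (\sum_y trans G p k x y * \sum_u (if M + eps < phi R G y u then 1 else 0))).
  apply: ler_sum => y _; apply: ler_wpM2l; first exact: trans_ge0.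
  case: ifP => h; first by apply: sumr_ge0 => u _; case: ifP.
  have [u hu] : exists u, M + eps < phi R G y u.
    apply/not_existsP => hn; move/negbT: h; rewrite bigmax0_le //; first lra.
    by move=> u; rewrite leNgt; apply/negP => hu; apply: (hn u).
  rewrite (bigD1 u) //= hu; apply: ler_wpDr => //.
  by apply: sumr_ge0 => v _; case: ifP.
under eq_bigr => y _ do rewrite mulr_sumr.
rewrite exchange_big /=.
apply: (@le_trans _ _ (\sum_(u < n) expR (- (D * eps ^+ 2 / 8)))).
  apply: ler_sum => u _; apply: le_trans; first by apply: (chern_u (x:=x) (u:=u)) => //; exact: hM.
  rewrite ler_expR lerN2; apply: ler_wpM2r; first lra.
  by apply: ler_wpM2r; [apply: sqr_ge0|apply: hD].
by rewrite sumr_const card_ord mulr_natl.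
Qed.
End Chernoff.
Lemma half_odd2 (k j : nat) : odd k -> ((k.+1)%/2 <= j)%N = (k < 2*j)%N.
Proof.
move=> ho; have := odd_double_half k; rewrite ho => h; rewrite -h.
apply/idP/idP; lia.
Qed.

Section Analytic.
Variable R : realType.
Variables (p : R) (k : nat).
Hypothesis hkodd : odd k.

Definition Fpoly : {poly R} := \sum_(i < k.+1 | ((k.+1)%/2 <= i)%N)
  ('C(k, i)%:R)%:P * ((1 - p)%:P * 'X) ^+ i * (1 - (1 - p)%:P * 'X) ^+ (k - i).

Lemma Fpoly_E z : Fpoly.[z] = Fpk p k z.
Proof.
rewrite /Fpoly /Fpk /= horner_sum; apply: eq_bigr => i _.
by rewrite !(hornerE, horner_exp).
Qed.

Lemma h_cont : continuous (fun z : R => z - Fpk p k z).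
Proof.
have -> : (fun z : R => z - Fpk p k z) = horner ('X - Fpoly).
  by apply/funext => z; rewrite hornerD hornerN hornerX Fpoly_E.
exact: continuous_horner.
Qed.

Lemma Fpk0 : Fpk p k 0 = 0.
Proof.
rewrite /Fpk /= mulr0 big1 // => j hj; rewrite expr0n.
suff -> : (nat_of_ord j == 0%N) = false by rewrite mulr0 mul0r.
by apply/negbTE; move: hj; rewrite (half_odd2 _ hkodd); case: (nat_of_ord j).
Qed.

Lemma Fpk_full (q : R) : \sum_(i < k.+1) 'C(k, i)%:R * q ^+ i * (1 - q) ^+ (k - i) = 1.
Proof.
have := exprDn (1 - q) q k; rewrite subrK expr1n => h; rewrite [in RHS]h.
by apply: eq_bigr => i _; rewrite -mulr_natl; ring.
Qed.

Lemma Fpk_le1 z : 0 <= (1 - p) * z <= 1 -> Fpk p k z <= 1.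
Proof.
move=> /andP[q0 q1]; rewrite /Fpk /= -[X in _ <= X](Fpk_full ((1 - p) * z)).
rewrite [Y in Y <= _]big_mkcond /=; apply: ler_sum => i _.
have h : 0 <= 'C(k, i)%:R * ((1 - p) * z) ^+ i * (1 - (1 - p) * z) ^+ (k - i).
  by rewrite !mulr_ge0 // exprn_ge0 // subr_ge0.
by case: ifP.
Qed.

End Analytic.

Section Analytic2.
Variable R : realType.
Variables (p : R) (k : nat).
Hypothesis hkodd : odd k.
Hypothesis hk3 : (3 <= k)%N.

Lemma Fpk_01 : Fpk (0 : R) k 1 = 1.
Proof.
rewrite /Fpk /= subr0 mulr1 subrr.
rewrite (bigD1 ord_max) /=; last by rewrite (half_odd2 _ hkodd); lia.
rewrite subnn expr0 mulr1 expr1n mulr1 binn big1 ?addr0 // => j /andP[_ hj].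
have hj' : (j < k)%N.
  have := ltn_ord j; rewrite ltnS leq_eqVlt => /orP[/eqP e|//].
  by move: hj; rewrite -(inj_eq val_inj) /= e eqxx.
by rewrite expr0n subn_eq0 leqNgt hj' /= mulr0.
Qed.

Lemma pstar_ge0 : 0 <= pstar R k.
Proof.
apply: ub_le_sup.
  by exists 1 => q [/andP[_ ->]].
split; first by rewrite lexx ler01.
by exists 1; rewrite ltr01 lexx Fpk_01.
Qed.

Hypothesis hp1 : pstar R k < p.
Hypothesis hp2 : p <= 1.

Lemma p_ge0 : 0 <= p.
Proof. have h0 := pstar_ge0; have h1 : pstar R k < p := hp1; lra. Qed.

Lemma F_ne z : 0 < z -> z <= 1 -> Fpk p k z != z.
Proof.
move=> z0 z1; apply/eqP => e.
suff hh : p <= pstar R k by have h1 : pstar R k < p := hp1; lra.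
apply: ub_le_sup; first by exists 1 => q [/andP[_ ->]].
split; first by rewrite p_ge0 hp2.
by exists z; rewrite z0 z1.
Qed.

Lemma F1_lt : Fpk p k 1 < 1.
Proof.
rewrite lt_neqAle F_ne ?ltr01 ?lexx //= Fpk_le1 //.
have h0 := p_ge0; have h2 : p <= 1 := hp2; rewrite mulr1; apply/andP; split; lra.
Qed.

Lemma F_lt z : 0 < z -> z <= 1 -> Fpk p k z < z.
Proof.
move=> z0 z1; rewrite ltNge; apply/negP => hz.
have h1 := F1_lt.
have [c hc hc0] : exists2 c, c \in `[z, 1] & (fun z : R => z - Fpk p k z) c = 0.
  apply: IVT => //; first by apply: continuous_subspaceT; apply: h_cont.
  have ha : z - Fpk p k z <= 0 by lra.
  have hb : 0 <= 1 - Fpk p k 1 by lra.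
  apply/andP; split.
    by rewrite /Num.min; case: ltP => h; lra.
  by rewrite /Num.max; case: ltP => h; lra.
move: hc; rewrite in_itv /= => /andP[cz c1].
have := F_ne (lt_le_trans z0 cz) c1; simpl in hc0.
by rewrite (_ : Fpk p k c = c) ?eqxx //; lra.
Qed.

Lemma exists_c (gamma : R) : 0 < gamma -> exists c g' : R,
  [/\ 0 < c, c <= g', 0 < g', g' <= 1/2 & g' <= gamma / 2] /\
  forall z, 0 <= z -> z <= 1 -> Fpk p k z <= Num.max (z - c) g'.
Proof.
move=> g0; set g' := Num.min (gamma / 2) (1 / 2).
have g'0 : 0 < g' by rewrite lt_min; apply/andP; split; lra.
have g'1 : g' <= 1/2 by rewrite ge_min lexx orbT.
have g'2 : g' <= gamma/2 by rewrite ge_min lexx.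
have g'3 : g' <= 1 by lra.
have [zs hzs hmin] := @EVT_min R (fun z => z - Fpk p k z) g' 1 g'3
   (continuous_subspaceT (@h_cont R p k)).
move: hzs; rewrite in_itv /= => /andP[zs0 zs1].
have c00 : 0 < zs - Fpk p k zs by have := F_lt (lt_le_trans g'0 zs0) zs1; lra.
set c := Num.min (zs - Fpk p k zs) g'.
have c0 : 0 < c by rewrite lt_min c00 g'0.
have c1 : c <= zs - Fpk p k zs by rewrite ge_min lexx.
have c2 : c <= g' by rewrite ge_min lexx orbT.
exists c, g'; split => // z z0 z1.
rewrite le_max; apply/orP.
case: (leP g' z) => hz.
  left; have := hmin z; rewrite in_itv /= hz z1 => /(_ isT) /= h; lra.
right.
have [->|zp] := eqVneq z 0; first by rewrite Fpk0 // ltW.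
have zp' : 0 < z by rewrite lt_neqAle eq_sym zp z0.
by have := F_lt zp' z1; lra.
Qed.
End Analytic2.
Lemma max_step (R : realType) (a c g' e bj : R) : c = 2 * e -> 0 < e ->
  a <= Num.max bj (g' + e) -> Num.max (a - c) g' + e <= Num.max (bj - e) (g' + e).
Proof.
move=> hc he; rewrite /Num.max.
by do ![case: ltP => ?]; move=> ?; lra.
Qed.

Unset Implicit Arguments.
Theorem proposition5p7 (R : realType) (k : nat) (p : R)
  (hk3 : (3 <= k)%N) (hkodd : odd k)
  (hp1 : pstar R k < p) (hp2 : p <= 1) :
  forall gamma : R, 0 < gamma ->
  exists T : nat,
  forall G : forall n : nat, rel 'I_n,
    (forall n, symmetric (G n)) ->
    (forall n, irreflexive (G n)) ->
    (* min_v delta_v = omega(log n) *)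
    (forall C : R, 0 < C -> exists N : nat, forall n : nat, (N <= n)%N ->
        forall u : 'I_n, C * ln (n%:R : R) <= (deg (G n) u)%:R) ->
    (* Pr(exists t <= T : phi_max^(t) <= gamma) = 1 - o(1) *)
    (forall eps : R, 0 < eps -> exists N : nat, forall n : nat, (N <= n)%N ->
        1 - eps <= prob_hit (G n) p k gamma T).
Proof.
move=> gamma g0.
have hp0 : 0 <= p := p_ge0 hkodd hk3 hp1.
have [c [g' [[c0 cg' g'0 g'1 g'2] hF]]] := exists_c hkodd hk3 hp1 hp2 g0.
set eps := c / 2.
have e0 : 0 < eps by rewrite /eps; lra.
have e1 : eps <= 1 by rewrite /eps; lra.
have g'3 : g' <= 1 by lra.
set b := fun t : nat => Num.max (1 - t%:R * eps) (g' + eps).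
have [T hT] : exists T : nat, 1 - T%:R * eps <= gamma.
  exists (Num.bound (1 / eps)).
  have := archi_boundP (ltW (divr_gt0 ltr01 e0)).
  rewrite ltr_pdivrMr // => h; lra.
have hbT : b T <= gamma by rewrite /b ge_max hT /=; rewrite /eps; lra.
exists T => G hsym hirr hdeg eps' he'.
set C0 := 24 / eps ^+ 2.
have C00 : 0 < C0 by rewrite /C0 divr_gt0 // exprn_gt0.
have [N1 hN1] := hdeg C0 C00.
exists (maxn (maxn N1 (Num.bound (T%:R / eps'))) 1) => n hn.
have hn1 : (N1 <= n)%N by move: hn; rewrite !geq_max => /andP[/andP[]].
have hn2 : (Num.bound (T%:R / eps') <= n)%N by move: hn; rewrite !geq_max => /andP[/andP[]].
have hn3 : (1 <= n)%N by move: hn; rewrite !geq_max => /andP[].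
set Gn := G n.
set x := n%:R : R.
have x1 : 1 <= x by rewrite /x ler1n.
set delta := n%:R * expR (- (C0 * ln (n%:R : R) * eps ^+ 2 / 8)).
have hdelta : delta = 1 / x ^+ 2.
  have e3 : C0 * ln (n%:R : R) * eps ^+ 2 / 8 = 3%:R * ln x.
    rewrite /C0 /x; field; lra.
  rewrite /delta e3 expRN expRM_natl lnK; last by rewrite posrE /x ltr0n.
  rewrite -/x; field; lra.
have d0 : 0 <= delta by rewrite hdelta divr_ge0 // exprn_ge0 //; lra.
have hTd : T%:R * delta <= eps'.
  have hx : T%:R / eps' < x.
    apply: lt_le_trans (archi_boundP _) _; first by apply: divr_ge0 => //; lra.
    by rewrite /x ler_nat.
  move: hx; rewrite ltr_pdivrMr // hdelta => hx.
  have hT0 : 0 <= T%:R :> R by [].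
  have xn0 : x != 0 by apply/negbT/gt_eqF; lra.
  have e : 1 / x ^+ 2 = (1 / x) * (1 / x) by rewrite expr2; field.
  rewrite e; set ix := 1 / x.
  have ix0 : 0 < ix by rewrite /ix divr_gt0 //; lra.
  have ixx : ix * x = 1 by rewrite /ix mul1r mulVf.
  have ix1 : ix <= 1 by nra.
  have h1 : T%:R * ix <= eps' by nra.
  have h2 : 0 <= T%:R * ix by rewrite mulr_ge0 // ltW.
  nra.
pose g (y z : config n) := phimax R Gn z <= Num.max (phimax R Gn y - c) g' + eps.
pose K (y z : config n) := trans Gn p k y z * (if g y z then 1 else 0).
have K0 y z : 0 <= K y z by rewrite /K mulr_ge0 ?trans_ge0 //; case: ifP.
have KleT y z : K y z <= trans Gn p k y z.
  rewrite /K; case: ifP; rewrite ?mulr1 ?mulr0 // => _; exact: trans_ge0.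
have Ks y : 1 - delta <= \sum_z K y z /\ \sum_z K y z <= 1.
  have hs : \sum_z K y z = 1 - \sum_z trans Gn p k y z * (if g y z then 0 else 1).
    rewrite -[X in _ = X - _](trans_sum1 Gn p k y) -sumrB; apply: eq_bigr => z _.
    by rewrite /K; case: ifP => _; ring.
  have hb := @step_bound R n Gn p k hp0 hp2 hkodd y c g' eps (C0 * ln (n%:R : R))
    e0 e1 (ltW c0) (ltW g'0) g'3 hF (hN1 n hn1).
  have hge : 0 <= \sum_z trans Gn p k y z * (if g y z then 0 else 1).
    by apply: sumr_ge0 => z _; rewrite mulr_ge0 ?trans_ge0 //; case: ifP.
  rewrite hs; split; [rewrite -/delta in hb; lra | lra].
have [hc1 _] := chain (allR n) K0 d0 Ks T.
suff key : \sum_(w : {ffun 'I_T.+1 -> config n} | w ord0 == allR n)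
    \prod_(t < T) K (w (inord t)) (w (inord t.+1)) <= prob_hit Gn p k gamma T.
  lra.
rewrite /prob_hit [X in _ <= X]big_mkcond [X in X <= _]big_mkcond /=.
apply: ler_sum => w _.
case: (eqVneq (w ord0) (allR n)) => h0 //=.
case: (boolP [exists t, phimax R Gn (w t) <= gamma]) => hex.
  by apply: ler_prod => t _; rewrite K0 KleT.
suff -> : \prod_(t < T) K (w (inord t)) (w (inord t.+1)) = 0 by [].
case: (boolP [forall t : 'I_T, g (w (inord t)) (w (inord t.+1))]) => hall; last first.
  move/forallPn: hall => [t ht].
  by rewrite (bigD1 t) //= /K (negbTE ht) mulr0 mul0r.
exfalso; move/negP: hex; apply; apply/existsP; exists (inord T).
have inv : forall j, (j <= T)%N -> phimax R Gn (w (inord j)) <= b j.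
  elim=> [|j IH] hj.
    have -> : inord 0 = ord0 :> 'I_T.+1 by apply/val_inj; rewrite /= inordK.
    rewrite h0 /b le_max; apply/orP; left; rewrite mul0r subr0.
    exact: phimax_le1.
  have hj' : (j < T)%N by [].
  have := forallP hall (Ordinal hj') => /= hg.
  have := IH (ltnW hj) => hI.
  apply: le_trans hg _.
  have -> : b j.+1 = Num.max ((1 - j%:R * eps) - eps) (g' + eps).
    by rewrite /b -natr1 mulrDl mul1r opprD addrA.
  by apply: max_step => //; rewrite /eps; lra.
exact: le_trans (inv T (leqnn T)) hbT.
Qed.
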